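(* Let $R>0$, let $E\subset\mathbb{R}^d$ be an $R$-supported body and $A=co_R(E)$. Then: (i) $\partial E\subset\partial A$; (ii) $\operatorname{int}(E)\subset\operatorname{int}(A)$; (iii) $\mathcal{N}_R(E,a)=\mathcal{N}_R(A,a)$ for every $a\in\partial E$; (iv) $co_R(E)=E_R\cap\bigcap\{\mathbb{R}^d\setminus B(a+R\theta): a\in\partial E,\ \theta\in\mathcal{N}_R(E,a)\}$.
   Context: A body is a nonempty closed subset of $\mathbb{R}^d$. Fix $R>0$; $B(x)=\{y:|y-x|<R\}$; $S^{d-1}$ is the unit sphere. For a body $E$, $E_R=\{x:\operatorname{dist}(x,E)<R\}$. The $R$-hulloid is $co_R(E)=\bigcap\{\mathbb{R}^d\setminus B : B \text{ an open ball of radius } R,\ B\cap E=\emptyset\}$ (equal to $\mathbb{R}^d$ if no such ball exists). For a body $A$ and $a\in\partial A$, $\mathcal{N}_R(A,a)=\{v\in S^{d-1}: A\cap B(a+Rv)=\emptyset\}$ (the unit vectors $R$-supporting $A$ at $a$). A body $A$ is $R$-supported if $\mathcal{N}_R(A,a)\neq\emptyset$ for every $a\in\partial A$. *)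

(* Defs.v *)
(* Topological notions (closed, closure, interior) are those of the library's
   (product = Euclidean) topology on 'rV[R]_d; metric notions (balls, unit
   sphere, distance) use the Euclidean norm defined below. *)
From HB Require Import structures.
From mathcomp Require Import all_boot all_order all_algebra.
From mathcomp Require Import all_classical all_reals all_analysis.
Set Implicit Arguments. Unset Strict Implicit. Unset Printing Implicit Defensive.
Import Order.TTheory GRing.Theory Num.Theory.
Import numFieldNormedType.Exports.
Local Open Scope classical_set_scope.
Local Open Scope ring_scope.

Section Defs.
Context {R : realType} {d : nat}.
Notation V := 'rV[R]_d.

Definition enorm (v : V) : R := Num.sqrt (\sum_(i < d) (v ord0 i) ^+ 2).
Definition edist (x y : V) : R := enorm (x - y).

Definition eball (x : V) (r : R) : set V := [set y | edist y x < r].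

Definition usphere : set V := [set v | enorm v = 1].

Definition body (E : set V) : Prop := closed E /\ E !=set0.

Definition bdry (A : set V) : set V := closure A `\` A°.

Definition nbhdR (r : R) (E : set V) : set V :=
  [set x | exists2 y, E y & edist x y < r].

Definition hulloid (r : R) (E : set V) : set V :=
  [set x | forall c : V, eball c r `&` E = set0 -> ~ eball c r x].

Definition NR (r : R) (A : set V) (a : V) : set V :=
  [set v | usphere v /\ A `&` eball (a + r *: v) r = set0].

Definition Rsupported (r : R) (A : set V) : Prop :=
  body A /\ forall a, bdry A a -> NR r A a !=set0.
End Defs.

(* Main.v *)
From Pilot Require Import Defs.
From HB Require Import structures.
From mathcomp Require Import all_boot all_order all_algebra.
From mathcomp Require Import all_classical all_reals all_analysis.
From mathcomp Require Import ring lra.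
Import Pilot.Defs.
Import Order.TTheory GRing.Theory Num.Theory.
Import numFieldNormedType.Exports.
Local Open Scope classical_set_scope.
Local Open Scope ring_scope.

Section Helpers.
Context {R : realType} {d : nat}.
Notation V := 'rV[R]_d.
Implicit Types u v w : V.

Lemma sumsq_ge0 v : 0 <= \sum_(i < d) (v ord0 i) ^+ 2.
Proof. by apply: sumr_ge0 => i _; exact: sqr_ge0. Qed.

Lemma enorm_ge0 v : 0 <= enorm v.
Proof. exact: sqrtr_ge0. Qed.

Lemma enorm_sq v : enorm v ^+ 2 = \sum_(i < d) (v ord0 i) ^+ 2.
Proof. by rewrite /enorm sqr_sqrtr // sumsq_ge0. Qed.

Lemma enormZ k v : enorm (k *: v) = `|k| * enorm v.
Proof.
rewrite /enorm -sqrtr_sqr -sqrtrM ?sqr_ge0 // mulr_sumr; congr Num.sqrt.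
by apply: eq_bigr => i _; rewrite mxE exprMn.
Qed.

Lemma enormN v : enorm (- v) = enorm v.
Proof. by rewrite -scaleN1r enormZ normrN normr1 mul1r. Qed.

Lemma enorm0 : enorm (0 : V) = 0.
Proof.
rewrite /enorm big1 ?sqrtr0 // => i _; by rewrite mxE expr0n.
Qed.

Lemma CS (a b : 'I_d -> R) :
  \sum_i a i * b i <= Num.sqrt (\sum_i a i ^+ 2) * Num.sqrt (\sum_i b i ^+ 2).
Proof.
set A := \sum_i a i ^+ 2; set B := \sum_i b i ^+ 2; set P := \sum_i a i * b i.
have A0 : 0 <= A by apply: sumr_ge0 => i _; exact: sqr_ge0.
have B0 : 0 <= B by apply: sumr_ge0 => i _; exact: sqr_ge0.
set al := Num.sqrt B; set be := Num.sqrt A.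
have H : 0 <= \sum_i (al * a i - be * b i) ^+ 2
  by apply: sumr_ge0 => i _; exact: sqr_ge0.
have E : \sum_i (al * a i - be * b i) ^+ 2 = 2 * (al * be) * (al * be - P).
  have -> : \sum_i (al * a i - be * b i) ^+ 2 =
     al ^+ 2 * A - 2 * al * be * P + be ^+ 2 * B.
    rewrite /A /B /P !mulr_sumr -!sumrB -big_split /=.
    apply: eq_bigr => i _; move: (al) (be) (a i) (b i) => p q s t. ring.
  have eA : A = be ^+ 2 by rewrite /be sqr_sqrtr.
  have eB : B = al ^+ 2 by rewrite /al sqr_sqrtr.
  rewrite [in X in X = _]eA [in X in X = _]eB.
  move: (al) (be) (P) => p q t; ring.
have alb0 : 0 <= al * be by rewrite mulr_ge0 // sqrtr_ge0.
case: (ltrgt0P (al * be)) alb0 => // [abp|ab0] _.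
  move: H; rewrite E pmulr_rge0; last by rewrite mulr_gt0.
  by rewrite subr_ge0 mulrC.
rewrite -/al -/be mulrC ab0.
move/eqP: ab0; rewrite mulf_eq0 => /orP[] /eqP.
  move=> /eqP; rewrite sqrtr_eq0 => B0'.
  have Bz : B = 0 by apply/eqP; rewrite eq_le B0' B0.
  have bz := psumr_eq0P (fun i _ => sqr_ge0 (b i)) Bz.
  rewrite /P big1 // => i _; have := bz i isT => /eqP; rewrite sqrf_eq0 => /eqP ->.
  by rewrite mulr0.
move=> /eqP; rewrite sqrtr_eq0 => A0'.
have Az : A = 0 by apply/eqP; rewrite eq_le A0' A0.
have az := psumr_eq0P (fun i _ => sqr_ge0 (a i)) Az.
rewrite /P big1 // => i _; have := az i isT => /eqP; rewrite sqrf_eq0 => /eqP ->.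
by rewrite mul0r.
Qed.

Lemma enormD u v : enorm (u + v) <= enorm u + enorm v.
Proof.
have h : 0 <= enorm u + enorm v by rewrite addr_ge0 // enorm_ge0.
rewrite -(ger0_norm h) -sqrtr_sqr /enorm ler_sqrt ?sqr_ge0 //.
rewrite sqrrD !sqr_sqrtr ?sumsq_ge0 //.
have -> : \sum_(i < d) ((u + v) ord0 i) ^+ 2 =
  \sum_(i < d) (u ord0 i) ^+ 2 + 2 * \sum_(i < d) (u ord0 i * v ord0 i)
  + \sum_(i < d) (v ord0 i) ^+ 2.
  rewrite mulr_sumr -!big_split /=; apply: eq_bigr => i _; rewrite mxE; ring.
rewrite lerD2r lerD2l mulr2n -mulr2n -mulr_natl ler_pM2l //.
exact: CS.
Qed.

Lemma edist_sym u v : edist u v = edist v u.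
Proof. by rewrite /edist -enormN opprB. Qed.

Lemma edist_tri u v w : edist u w <= edist u v + edist v w.
Proof.
rewrite /edist; have -> : u - w = (u - v) + (v - w) by rewrite addrA subrK.
exact: enormD.
Qed.

Lemma coord_le v i : `|v ord0 i| <= enorm v.
Proof.
rewrite -sqrtr_sqr /enorm ler_sqrt ?sumsq_ge0 //.
rewrite (bigD1 i) //= lerDl; apply: sumr_ge0 => j _; exact: sqr_ge0.
Qed.

Lemma mxnorm_le v : `|v| <= enorm v.
Proof.
rewrite [leLHS]/Num.Def.normr /= mx_normrE; apply: bigmax_le; first exact: enorm_ge0.
move=> [i j] _ /=; rewrite (ord1 i); exact: coord_le.
Qed.

Lemma coord_le_mx v i : `|v ord0 i| <= `|v|.
Proof.
rewrite [leRHS]/Num.Def.normr /= mx_normrE.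
exact: (le_bigmax _ (fun ij : 'I_1 * 'I_d => `|v ij.1 ij.2|) (ord0, i)).
Qed.

Lemma enorm_le v : enorm v <= d%:R * `|v|.
Proof.
have nv0 : 0 <= `|v| by [].
have h : 0 <= d%:R * `|v| by rewrite mulr_ge0.
rewrite -(ger0_norm h) -sqrtr_sqr /enorm ler_sqrt ?sqr_ge0 //.
apply: (@le_trans _ _ (\sum_(i < d) `|v| ^+ 2)).
  apply: ler_sum => i _; rewrite -real_normK ?num_real //.
  rewrite lerXn2r ?nnegrE //.
  exact: coord_le_mx.
rewrite sumr_const card_ord exprMn -[X in X <= _]mulr_natl ler_wpM2r ?sqr_ge0 //.
rewrite -natrX ler_nat; case: d => // n; rewrite expnS leq_pmulr //.
Qed.

Lemma enorm_lip u w : `|enorm u - enorm w| <= enorm (u - w).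
Proof.
have h1 := enormD (u - w) w; rewrite subrK in h1.
have h2 := enormD (w - u) u; rewrite subrK -opprB enormN in h2.
rewrite ler_norml; apply/andP; split; lra.
Qed.

Lemma cont_dist p : continuous (fun y : V => enorm (y - p)).
Proof.
move=> y; apply/(@cvgrPdist_lt _ _ _ (nbhs y)) => e e0.
have d1 : 0 < d%:R + 1 :> R by rewrite ltr_wpDl.
apply/nbhs_ballP; exists (e / (d%:R + 1)); first by rewrite /= divr_gt0.
move=> z; rewrite -ball_normE /= => hz.
apply: le_lt_trans (enorm_lip _ _) _.
have -> : y - p - (z - p) = y - z by rewrite opprB addrA subrK.
apply: le_lt_trans (enorm_le _) _.
have n0 : 0 <= `|y - z| by [].
move: hz; rewrite ltr_pdivlMr // => hz.
apply: le_lt_trans hz; rewrite mulrC ler_wpM2l //; lra.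
Qed.

Lemma not_int (S : set V) a v r : 0 < r -> enorm v = 1 ->
  S `&` eball (a + r *: v) r = set0 -> ~ S° a.
Proof.
move=> r0 v1 H /nbhs_ballP. rewrite /nbhs_ball /nbhs_ball_. move=> [e /= e0 Hb].
set t := Num.min (e / 2) (r / 2).
have t0 : 0 < t by rewrite lt_min !divr_gt0.
have te : t < e by rewrite gt_min; apply/orP; left; lra.
have tr : t < r by rewrite gt_min; apply/orP; right; lra.
have Sp : S (a + t *: v).
  apply: Hb; rewrite -ball_normE /=.
  rewrite opprD addrA subrr sub0r normrN.
  apply: le_lt_trans (mxnorm_le _) _; rewrite enormZ v1 mulr1 gtr0_norm //.
have : (S `&` eball (a + r *: v) r) (a + t *: v).
  split => //; rewrite /eball /edist /=.
  have -> : a + t *: v - (a + r *: v) = (t - r) *: v.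
    by rewrite scalerBl opprD addrACA subrr add0r.
  rewrite enormZ v1 mulr1 ltr0_norm ?subr_lt0 //; lra.
by rewrite H.
Qed.

Lemma bdry_in (E : set V) a : closed E -> bdry E a -> E a.
Proof. by move=> /closure_id cE [ca _]; rewrite cE. Qed.

Lemma ct_eq (y c u : V) (s t : R) :
  y - (c + t *: u) = (y - (c + s *: u)) + (s - t) *: u.
Proof.
by rewrite scalerBl !opprD !addrA subrK.
Qed.

Lemma hull_sup (r : R) (E : set V) x : 0 < r -> closed E ->
  nbhdR r E x ->
  (forall a theta, bdry E a -> NR r E a theta ->
                   ~ eball (a + r *: theta) r x) ->
  hulloid r E x.
Proof.
move=> r0 cE [y0 Ey0 hy0] hx c hc hcx.
set u := x - c.
set n := enorm u.
have n0 : 0 <= n by exact: enorm_ge0.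
have nr : n < r by [].
pose ct t := c + t *: u.
have ct1 : ct 1 = x by rewrite /ct scale1r /u addrC subrK.
have ct0 : ct 0 = c by rewrite /ct scale0r addr0.
have xct t : x - ct t = (1 - t) *: u.
  by rewrite /ct opprD addrA -/u scalerBl scale1r.
pose T := [set t : R | (0 <= t <= 1) /\ exists2 y, E y & enorm (y - ct t) < r].
have T1 : T 1.
  split; first by rewrite ler01 lexx.
  by exists y0 => //; rewrite ct1 -/(edist y0 x) edist_sym.
have lbT : lbound T 0 by move=> t [/andP[]].
have hT : has_inf T by split; [exists 1 | exists 0].
set s := inf T.
have s0 : 0 <= s by apply: lb_le_inf => //; exists 1.
have s1 : s <= 1 by apply: (ge_inf hT.2).
have noT t y : 0 <= t -> t < s -> E y -> r <= enorm (y - ct t).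
  move=> t0 ts Ey; rewrite leNgt; apply/negP => hy.
  have : T t by split; [rewrite t0 /=; lra | exists y].
  move=> /(ge_inf hT.2); lra.
have disj y : E y -> r <= enorm (y - ct s).
  move=> Ey; rewrite leNgt; apply/negP => hy.
  have [s00|sp] := eqVneq s 0.
    have : (eball c r `&` E) y by split => //; rewrite /eball /edist /= -ct0 -s00.
    by rewrite hc.
  have sp' : 0 < s by rewrite lt_def sp s0.
  set dl := r - enorm (y - ct s).
  have dl0 : 0 < dl by rewrite subr_gt0.
  set k := dl / (n + 1).
  have k0 : 0 < k by rewrite divr_gt0 // ltr_wpDl.
  have kn : k * n < dl.
    have : k * (n + 1) = dl by rewrite /k mulfVK // gt_eqF // ltr_wpDl.
    nra.
  set eta := Num.min s k.
  have eta0 : 0 < eta by rewrite lt_min sp' k0.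
  have etas : eta <= s by rewrite ge_min lexx.
  have etak : eta <= k by rewrite ge_min lexx orbT.
  have := noT (s - eta) y; rewrite subr_ge0 etas ltrBlDr ltrDl eta0 => /(_ isT isT Ey).
  rewrite /ct (ct_eq _ _ _ s) -/(ct s).
  have -> : s - (s - eta) = eta by ring.
  move=> h.
  have h2 := enormD (y - ct s) (eta *: u).
  rewrite enormZ gtr0_norm // -/n in h2.
  have : eta * n <= k * n by rewrite ler_wpM2r.
  rewrite /dl in kn; lra.
have approx eps : 0 < eps -> exists2 y, E y &
    enorm (y - x) < 2 * r /\ enorm (y - ct s) < r + eps * n.
  move=> eps0; have [t [/andP[t0 t1] [y Ey hy]] ht] := inf_adherent eps0 hT.
  have st : s <= t by apply: (ge_inf hT.2); split; [rewrite t0 t1 | exists y].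
  exists y => //; split.
    have -> : y - x = (y - ct t) - (x - ct t) by rewrite opprB addrA subrK.
    rewrite xct; apply: le_lt_trans (enormD _ _) _.
    rewrite enormN enormZ ger0_norm ?subr_ge0 // -/n.
    have : (1 - t) * n <= n by rewrite ler_piMl // lerBlDr lerDl.
    lra.
  rewrite (ct_eq _ _ _ t); apply: le_lt_trans (enormD _ _) _.
  rewrite enormZ ger0_norm ?subr_ge0 // -/n.
  rewrite -/s in ht; have : (t - s) * n <= eps * n by apply: ler_wpM2r => //; lra.
  lra.
set K := E `&` ((fun y => enorm (y - x)) @^-1` `]-oo, 2 * r]).
have Kne : K !=set0.
  have [y Ey [hy _]] := approx 1 ltr01.
  by exists y; split => //=; rewrite in_itv /= ltW.
have cK : compact K.
  apply: bounded_closed_compact.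
    exists (2 * r + enorm x); split; first exact: num_real.
    move=> M hM y [_ /=]; rewrite in_itv /= => hy.
    apply: le_trans (mxnorm_le _) _.
    have -> : y = (y - x) + x by rewrite subrK.
    apply: le_trans (enormD _ _) _.
    apply: ltW; apply: le_lt_trans hM; lra.
  apply: closedI => //; apply: preimage_closed; last exact: lray_closed.
  by move=> z _; apply: cont_dist.
have cf : {within K, continuous (fun y : V => enorm (y - ct s))}.
  by apply: continuous_subspaceT; exact: cont_dist.
have [a aK amin] := @compact_EVT_min _ R (fun y : V => enorm (y - ct s)) K Kne cK cf.
move: aK; rewrite inE => -[Ea _].
have gr : enorm (a - ct s) <= r.
  apply/ler_addgt0Pr => e e0.
  have n1 : 0 < n + 1 by rewrite ltr_wpDl.
  have [y Ey [hy1 hy2]] := approx (e / (n + 1)) (divr_gt0 e0 n1).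
  have : enorm (a - ct s) <= enorm (y - ct s).
    by apply: amin; rewrite inE; split => //=; rewrite in_itv /= ltW.
  have : e / (n + 1) * n <= e.
    have : e / (n + 1) * (n + 1) = e by rewrite mulfVK // gt_eqF.
    have : 0 < e / (n + 1) by rewrite divr_gt0.
    nra.
  lra.
have ga : enorm (a - ct s) = r by apply/eqP; rewrite eq_le gr disj.
set th := r^-1 *: (ct s - a).
have cth : a + r *: th = ct s.
  by rewrite /th scalerA mulfV ?gt_eqF // scale1r addrC subrK.
have Nth : NR r E a th.
  split.
    rewrite /usphere /= /th enormZ -enormN opprB ga gtr0_norm ?invr_gt0 //.
    by rewrite mulVf // gt_eqF.
  rewrite cth; apply/seteqP; split => // y [Ey /=]; rewrite /eball /edist /=.
  by move=> hy; have := disj y Ey; lra.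
have ba : bdry E a.
  split; first exact: subset_closure.
  exact: (@not_int E a th r r0 Nth.1 Nth.2).
apply: (hx a th ba Nth); rewrite cth /eball /edist /= xct enormZ ger0_norm ?subr_ge0 // -/n.
have : (1 - s) * n <= n by rewrite ler_piMl // lerBlDr lerDl.
lra.
Qed.

End Helpers.

Theorem mainTheorem2 (R : realType) (d : nat) (r : R) (E : set 'rV[R]_d) :
  0 < r -> Rsupported r E ->
  [/\ bdry E `<=` bdry (hulloid r E),
      E° `<=` (hulloid r E)°,
      (forall a, bdry E a -> NR r E a = NR r (hulloid r E) a) &
      hulloid r E =
        nbhdR r E `&`
        [set x | forall a theta, bdry E a -> NR r E a theta ->
                   ~ eball (a + r *: theta) r x]].
Proof.
move=> r0 [[cE _] hsup].
have EA : E `<=` hulloid r E.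
  move=> x Ex c hc hcx.
  have : (eball c r `&` E) x by split.
  by rewrite hc.
have hullB c : E `&` eball c r = set0 -> hulloid r E `&` eball c r = set0.
  move=> hE; apply/seteqP; split => // z [hz hb].
  by apply: (hz c _ hb); rewrite setIC.
split.
- move=> a [ca nia]; split; first exact: (closureS EA).
  have [v [v1 hv]] := hsup a (conj ca nia).
  exact: (@not_int _ _ (hulloid r E) a v r r0 v1 (hullB _ hv)).
- exact: interiorS.
- move=> a _; apply/seteqP; split => v [v1 hv]; split => //.
    exact: hullB.
  apply/seteqP; split => // z [Ez hz].
  have : (hulloid r E `&` eball (a + r *: v) r) z by split => //; exact: EA.
  by rewrite hv.
- apply/seteqP; split.
    move=> x hx; split.
      have [//|nh] := pselect (nbhdR r E x).
      exfalso; apply: (hx x).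
        apply/seteqP; split => // y [hy Ey]; apply: nh; exists y => //.
        by rewrite edist_sym.
      by rewrite /eball /edist /= subrr enorm0.
    move=> a th hb hN; apply: hx; rewrite setIC; exact: hN.2.
  move=> x [h1 h2]; exact: hull_sup.
Qed.
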